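(* Let $v_!:=-\otimes_{k[\Delta_{a,\mathrm{inj}}]}k[\square_{\mathrm{inj}}]$ be left adjoint to $v^\ast$. The unit $\eta_M\colon M\to v^\ast v_!M$ need not induce an isomorphism on $H^a_{-1}$. In fact, for the representable right module $M=k[\Delta_{a,\mathrm{inj}}](-,[0])$ one has $H^a_{-1}(M)=0$, whereas $H^a_{-1}(v^\ast v_!M)\cong k$.
   Context: $k$ is a field; $k[\mathcal C]$ is the $k$-linearization of a small category; right modules over a $k$-linear category are $k$-linear functors from its opposite to $\mathrm{Vect}_k$; for a right module $X$ and $f\colon x\to y$, $X(f)\colon X(y)\to X(x)$. $\Delta_{a,\mathrm{inj}}$: objects $[n]=\{0<\dots<n\}$, $n\ge0$, and $[-1]=\varnothing$, injective order-preserving maps; $\delta^i\colon[n-1]\to[n]$ omits $i$. $\square_{\mathrm{inj}}$: objects $\square_n=\{0,1\}^n$, $n\ge0$, morphisms generated by cofaces $\delta_i^\varepsilon\colon\square_{n-1}\to\square_n$ ($\varepsilon\in\{0,1\}$, $1\le i\le n$) inserting $\varepsilon$ as $i$-th coordinate. The cubical sign embedding $v\colon k[\Delta_{a,\mathrm{inj}}]\to k[\square_{\mathrm{inj}}]$ is $[n]\mapsto\square_{n+1}$, $\delta^i\mapsto\delta^1_{i+1}-\delta^0_{i+1}$; $v^\ast$ is restriction. For a right $k[\Delta_{a,\mathrm{inj}}]$-module $Y$, $H^a_{-1}(Y)=\operatorname{coker}(Y(\delta^0)\colon Y([0])\to Y([-1]))$. *)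

(* Defs.v *)
From HB Require Import structures.
From mathcomp Require Import all_boot all_order all_algebra.
Set Implicit Arguments. Unset Strict Implicit. Unset Printing Implicit Defensive.
Import Order.TTheory GRing.Theory Num.Theory.
Local Open Scope ring_scope.

(* The object [n] (n >= -1) is encoded by its cardinality a = n+1 : nat, *)
(* i.e. [n] = 'I_(n+1) = {0 < ... < n}; in particular [-1] = 'I_0.       *)

Definition dinjb (a b : nat) (f : {ffun 'I_a -> 'I_b}) : bool :=
  injectiveb f && [forall i : 'I_a, forall j : 'I_a, (i <= j)%N ==> (f i <= f j)%N].

Definition dhom (a b : nat) := {f : {ffun 'I_a -> 'I_b} | dinjb f}.

Lemma dinjb_delta0 : dinjb ([ffun i : 'I_0 => (ord0 : 'I_1)]).
Proof. by rewrite /dinjb; apply/andP; split; [apply/injectiveP => -[] | apply/forallP => -[]]. Qed.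

Definition delta0 : dhom 0 1 := @exist _ (@dinjb 0 1) _ dinjb_delta0.

(* The representable right k[Delta_{a,inj}]-module M = k[Delta](-,[0]).  *)
(* M(a) = free k-vector space on Delta(a,[0]) (finitely supported = all  *)
(* functions, the hom set being finite); for g : a -> b,                 *)
(* M(g) : M(b) -> M(a) sends the basis element h to h o g.               *)

Definition Mrep (k : fieldType) (a : nat) := {ffun dhom a 1 -> k^o}.

Definition Mact (k : fieldType) (a b : nat) (g : dhom a b) (x : Mrep k b) : Mrep k a :=
  [ffun h : dhom a 1 =>
     \sum_(h' : dhom b 1 | [ffun i => sval h' (sval g i)] == sval h) x h'].

(* paper's coordinate i (1 <= i <= n) is our 0-based index i-1.          *)

Definition cube (n : nat) := {ffun 'I_n -> bool}.

(* coface delta_{i+1}^e : square_n -> square_{n+1}, inserting e as the   *)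
(* (0-based) i-th coordinate.                                            *)
Definition coface (n : nat) (i : 'I_n.+1) (e : bool) (x : cube n) : cube n.+1 :=
  [ffun j => if unlift i j is Some j' then x j' else e].

Inductive cgen : forall m n : nat, {ffun cube m -> cube n} -> Prop :=
| cgen_id n : cgen [ffun x : cube n => x]
| cgen_cf m n (i : 'I_n.+1) (e : bool) (g : {ffun cube m -> cube n}) :
    cgen g -> cgen [ffun x => coface i e (g x)].

(* For convenience the action is given on all set maps cube m -> cube n; *)
(* only its values on morphisms (cgen) are constrained or ever used.     *)
Record cmod (k : fieldType) := CMod {
  cobj : nat -> lmodType k;
  cact : forall m n : nat, {ffun cube m -> cube n} -> {linear cobj n -> cobj m};
  cact_id : forall n (y : cobj n), cact [ffun x : cube n => x] y = y;
  cact_comp : forall l m n (f : {ffun cube l -> cube m}) (g : {ffun cube m -> cube n}),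
      cgen f -> cgen g ->
      forall y, cact [ffun x => g (f x)] y = cact f (cact g y)
}.

Definition is_cmor (k : fieldType) (N X : cmod k) (u : forall n, cobj N n -> cobj X n) :=
  (forall n, linear (u n)) /\
  (forall m n (f : {ffun cube m -> cube n}), cgen f ->
     forall y, u m (cact N f y) = cact X f (u n y)).
Arguments is_cmor {k} N X u.

(* The cubical sign embedding v : k[Delta_{a,inj}] -> k[square_inj],     *)
(* [n] |-> square_{n+1} (i.e. a |-> a with our encoding),               *)
(* delta^i |-> delta^1_{i+1} - delta^0_{i+1}.  On a general morphism    *)
(* g : a -> b (a composite of delta^i's) v(g) is the product of these   *)
(* differences, which expands to                                         *)
(*   v(g) = sum_{eps} (-1)^{#zeros of eps} ins g eps,                    *)
(* eps ranging over the 0/1 values on the complement of the image of g, *)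
(* and ins g eps : square_a -> square_b, x |-> (y_{g i} = x_i, y_j =     *)
(* eps_j for j not in the image).  We encode eps as an element of cube b *)
(* equal to true on the image of g.                                      *)

Definition insmap (a b : nat) (g : dhom a b) (eps : cube b) : {ffun cube a -> cube b} :=
  [ffun x : cube a => [ffun j : 'I_b =>
     if [pick i : 'I_a | sval g i == j] is Some i then x i else eps j]].

Definition vstar_act (k : fieldType) (X : cmod k) (a b : nat) (g : dhom a b)
    (y : cobj X b) : cobj X a :=
  \sum_(eps : cube b | [forall i : 'I_a, eps (sval g i)])
     ((-1) ^+ #|[pred j | ~~ eps j]|) *: cact X (insmap g eps) y.
Arguments vstar_act {k} X {a b} g y.

Definition is_Mmor (k : fieldType) (X : cmod k) (phi : forall a, Mrep k a -> cobj X a) :=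
  (forall a, linear (phi a)) /\
  (forall a b (g : dhom a b) (x : Mrep k b),
     phi a (Mact g x) = vstar_act X g (phi b x)).
Arguments is_Mmor {k} X phi.

(* (N, eta) is v_! M with its unit: eta : M -> v^* N is a universal arrow  *)
(* from M to v^* , i.e. N = v_! M (left adjoint of v^* ) and eta = eta_M.   *)
Definition is_vshriek_of_M (k : fieldType) (N : cmod k)
    (eta : forall a, Mrep k a -> cobj N a) :=
  is_Mmor N eta /\
  forall (X : cmod k) (phi : forall a, Mrep k a -> cobj X a), is_Mmor X phi ->
    (exists u, is_cmor N X u /\ forall a x, u a (eta a x) = phi a x) /\
    (forall u u', is_cmor N X u -> is_cmor N X u' ->
       (forall a x, u a (eta a x) = phi a x) ->
       (forall a x, u' a (eta a x) = phi a x) ->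
       forall n y, u n y = u' n y).
Arguments is_vshriek_of_M {k} N eta.

(* Main.v *)
Require Import Defs.
From HB Require Import structures.
From mathcomp Require Import all_boot all_order all_algebra.
Set Implicit Arguments. Unset Strict Implicit. Unset Printing Implicit Defensive.
Import GRing.Theory.
Local Open Scope ring_scope.

Section MkLin.
Variables (k : fieldType) (U V : lmodType k) (f : U -> V) (hf : linear f).
Definition mklin (p : linear f) : U -> V := f.
HB.instance Definition _ := GRing.isLinear.Build k U V _ (mklin hf) hf.
Lemma lin_sum I r (P : pred I) (F : I -> U) :
  f (\sum_(i <- r | P i) F i) = \sum_(i <- r | P i) f (F i).
Proof. exact: (linear_sum (mklin hf)). Qed.
Lemma lin_Z c x : f (c *: x) = c *: f x.
Proof. exact: (linearZ_LR (mklin hf)). Qed.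
Lemma lin_D x y : f (x + y) = f x + f y.
Proof. exact: (linearD (mklin hf)). Qed.
Lemma lin_0 : f 0 = 0.
Proof. exact: (linear0 (mklin hf)). Qed.
End MkLin.

Definition cgb (n : nat) (h : {ffun cube n -> cube 1}) : bool :=
  (n <= 1)%N && [forall x, forall i : 'I_n, h x ord0 == x i].
Definition B (n : nat) := {h : {ffun cube n -> cube 1} | cgb h}.

Lemma cgen_le m n (g : {ffun cube m -> cube n}) : cgen g -> (m <= n)%N.
Proof. by elim=> // m' n' i e g' _ IH; apply: leq_trans IH _. Qed.

Lemma cgen_eq m n (g : {ffun cube m -> cube n}) : cgen g -> (n <= m)%N ->
  forall x (i : 'I_n) (j : 'I_m), val i = val j -> g x i = x j.
Proof.
elim=> [n' | m' n' i e g' cg _ ] hle.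
  by move=> x i j /val_inj ->; rewrite ffunE.
by have := cgen_le cg; rewrite leqNgt (leq_trans _ hle).
Qed.

Lemma cube0_eq (x y : cube 0) : x = y.
Proof. by apply/ffunP => -[]. Qed.

Lemma cgb_cgen n (h : {ffun cube n -> cube 1}) : cgb h -> cgen h.
Proof.
case: n h => [|[|n]] h /andP[// hle /forallP hx].
  set x0 : cube 0 := [ffun i => false].
  have -> : h = [ffun x => coface ord0 (h x0 ord0) ([ffun x : cube 0 => x] x)].
    apply/ffunP => x; apply/ffunP => j; rewrite !ffunE ord1 (cube0_eq x x0).
    by rewrite unlift_none.
  exact: (cgen_cf _ _ (cgen_id 0)).
have -> : h = [ffun x : cube 1 => x] by
  apply/ffunP => x; apply/ffunP => j; rewrite ffunE ord1; exact/eqP/(forallP (hx x)).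
exact: cgen_id.
Qed.

Lemma cgb_comp m n (f : {ffun cube m -> cube n}) (h : {ffun cube n -> cube 1}) :
  cgen f -> cgb h -> cgb [ffun x => h (f x)].
Proof.
move=> cf /andP[hn /forallP hx]; have hmn := cgen_le cf.
apply/andP; split; first exact: leq_trans hn.
apply/forallP => x; apply/forallP => i; rewrite ffunE.
have hm : (0 < m)%N := leq_ltn_trans (leq0n i) (ltn_ord i).
have hn0 : (0 < n)%N := leq_trans hm hmn.
have enm : n = m by apply/eqP; rewrite eqn_leq hmn (leq_trans hn hm).
pose i' := Ordinal hn0.
rewrite (eqP (forallP (hx (f x)) i')) (@cgen_eq _ _ _ cf _ x i' i) ?enm //.
apply/esym/eqP; rewrite -leqn0 -ltnS; exact: leq_trans (ltn_ord i) (leq_trans hmn hn).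
Qed.

Lemma ord_le1 n (hn : (n <= 1)%N) (i j : 'I_n) : i = j.
Proof.
apply/val_inj; case: i j => [i hi] [j hj] /=.
have := leq_trans hi hn; have := leq_trans hj hn.
by rewrite !ltnS !leqn0 => /eqP -> /eqP ->.
Qed.

Lemma sum1 (R : nmodType) (T : finType) (t : T) (ht : forall u, u = t) (P : pred T)
  (F : T -> R) : \sum_(i | P i) F i = if P t then F t else 0.
Proof.
rewrite big_mkcond (big_pred1 t) // => u; by rewrite /= (ht u) eqxx.
Qed.

Lemma cgb0 (F : {ffun cube 0 -> cube 1}) : cgb F.
Proof. by apply/andP; split => //; apply/forallP => x; apply/forallP => -[]. Qed.

Definition x0 : cube 0 := [ffun i => false].
Definition hb (b : bool) : B 0 := exist (fun h => is_true (cgb h)) [ffun x : cube 0 => [ffun j : 'I_1 => b]] (cgb0 _).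

Lemma B0_eq (h : B 0) : h = hb (sval h x0 ord0).
Proof.
apply/val_inj; apply/ffunP => x; apply/ffunP => j.
by rewrite /= !ffunE (cube0_eq x x0) ord1.
Qed.

Lemma cgb_id : cgb [ffun x : cube 1 => x].
Proof. by apply/andP; split => //; apply/forallP => x; apply/forallP => i; rewrite ffunE (ord1 i). Qed.
Definition hid : B 1 := exist (fun h => is_true (cgb h)) _ cgb_id.

Lemma B1_eq (h : B 1) : h = hid.
Proof.
case: h => h hp; have /andP[_ /forallP hx] := hp.
apply/val_inj; apply/ffunP => x; apply/ffunP => j.
by rewrite /= ffunE (ord1 j); apply/eqP/(forallP (hx x) ord0).
Qed.

Lemma sumBF (R : nmodType) n (F : {ffun cube n -> cube 1}) (p : cgb F) (G : B n -> R) :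
  \sum_(h : B n | F == val h) G h = G (exist _ F p).
Proof. by apply: big_pred1 => h; rewrite /= -val_eqE /= eq_sym. Qed.

Lemma dhom_le a b (g : dhom a b) : (a <= b)%N.
Proof.
case: g => g /andP[/injectiveP ig _].
by have := @leq_card _ _ g ig; rewrite !card_ord.
Qed.

Lemma dhom_eq a b (hb1 : (b <= 1)%N) (g g' : dhom a b) : g = g'.
Proof. by apply/val_inj; apply/ffunP => i; apply: ord_le1. Qed.

Lemma d11_p : dinjb [ffun i : 'I_1 => i].
Proof.
apply/andP; split; first by apply/injectiveP => i j; rewrite !ffunE.
by apply/forallP => i; apply/forallP => j; rewrite !ffunE; apply/implyP.
Qed.
Definition d11 : dhom 1 1 := exist (fun f => is_true (@dinjb 1 1 f)) _ d11_p.

Lemma insmap_cgb a (g : dhom a 1) eps : cgb (insmap g eps).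
Proof.
apply/andP; split; first exact: dhom_le g.
apply/forallP => x; apply/forallP => i; rewrite !ffunE.
case: pickP => [i0 _ | none]; first by rewrite (ord_le1 (dhom_le g) i0 i).
by move: (none i) => /=; rewrite (ord1 (sval g i)) eqxx.
Qed.

Lemma insmap_d0 eps : insmap delta0 eps = [ffun x => eps].
Proof.
apply/ffunP => x; apply/ffunP => j; rewrite !ffunE.
by case: pickP => [[] | _].
Qed.

Lemma cube1_sum (R : nmodType) (F : cube 1 -> R) :
  \sum_(e : cube 1) F e = F [ffun _ => true] + F [ffun _ => false].
Proof.
rewrite (bigD1 [ffun _ => true]) // (bigD1 [ffun _ => false]) //=; last first.
  by apply/eqP => /ffunP /(_ ord0); rewrite !ffunE.
rewrite big1 ?addr0 // => e /andP[e1 e2].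
have ee : e = [ffun _ => e ord0] by apply/ffunP => j; rewrite ffunE ord1.
by move: e1 e2; rewrite ee; case: (e ord0); rewrite eqxx // andbF.
Qed.

Section Main.
Variable k : fieldType.

Definition Xo (n : nat) : lmodType k := {ffun B n -> k^o}.
Definition Xactf m n (f : {ffun cube m -> cube n}) (y : Xo n) : Xo m :=
  [ffun h : B m => \sum_(h' : B n | [ffun x => val h' (f x)] == val h) y h'].
Lemma Xact_lin m n f : linear (@Xactf m n f).
Proof.
move=> c y z; apply/ffunP => h; rewrite !ffunE scaler_sumr -big_split /=.
by apply: eq_bigr => h' _; rewrite !ffunE.
Qed.
Definition Xact m n f : {linear Xo n -> Xo m} := mklin (@Xact_lin m n f).

Lemma Xact_id n (y : Xo n) : Xact [ffun x : cube n => x] y = y.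
Proof.
apply/ffunP => h; rewrite /Xact /mklin /Xactf ffunE (big_pred1 h) // => h'.
rewrite /= -val_eqE /=; congr (_ == _); apply/ffunP => x; by rewrite !ffunE.
Qed.

Lemma Xact_comp l m n (f : {ffun cube l -> cube m}) (g : {ffun cube m -> cube n}) :
  cgen f -> cgen g -> forall y, Xact [ffun x => g (f x)] y = Xact f (Xact g y).
Proof.
move=> cf cg y; apply/ffunP => h; rewrite /Xact /mklin /Xactf !ffunE.
under [RHS]eq_bigr do rewrite ffunE.
rewrite (exchange_big_dep xpredT) //= big_mkcond /=.
apply: eq_bigr => h' _.
rewrite big_mkcondl /= (sumBF (cgb_comp cg (valP h'))) /=.
by congr (if _ then _ else _); congr (_ == _); apply/ffunP => x; rewrite !ffunE.
Qed.

Definition Xmod : cmod k := CMod Xact_id Xact_comp.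


Lemma vstar_lin (X : cmod k) a b (g : dhom a b) : linear (vstar_act X g).
Proof.
move=> c y z; rewrite /vstar_act scaler_sumr -big_split /=.
apply: eq_bigr => eps _; rewrite linearD linearZ /= scalerDr !scalerA mulrC.
by [].
Qed.

Lemma vstar_id (X : cmod k) n (g : dhom n n) (hg : forall i, sval g i = i) y :
  vstar_act X g y = y.
Proof.
rewrite /vstar_act (big_pred1 [ffun _ => true]); last first.
  move=> eps /=; apply/forallP/eqP => [H | -> i]; last by rewrite ffunE.
  by apply/ffunP => i; rewrite ffunE -(hg i) H.
rewrite (eq_card0 (A := [pred j | ~~ [ffun _ => true] j])); last by move=> j; rewrite !inE ffunE.
rewrite expr0 scale1r.
have -> : insmap g [ffun _ => true] = [ffun x : cube n => x].
  apply/ffunP => x; apply/ffunP => j; rewrite !ffunE.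
  case: pickP => [i /eqP gij | none]; first by rewrite -gij hg.
  by move: (none j); rewrite hg eqxx.
exact: cact_id.
Qed.

Lemma cmor_vstar (X Y : cmod k) (u : forall n, cobj X n -> cobj Y n) a b (g : dhom a b) y :
  is_cmor X Y u -> (forall eps, cgen (insmap g eps)) ->
  u a (vstar_act X g y) = vstar_act Y g (u b y).
Proof.
move=> [ul un] hc; rewrite /vstar_act (lin_sum (ul a)); apply: eq_bigr => eps _.
by rewrite (lin_Z (ul a)) un.
Qed.

Definition id1 : Mrep k 1 := [ffun _ => 1].

Lemma Mact_id1 a (g : dhom a 1) : Mact g id1 = [ffun h => (h == g)%:R].
Proof.
apply/ffunP => h; rewrite !ffunE (sum1 (t := d11)); last by move=> u; apply: dhom_eq.
rewrite ffunE; have -> : [ffun i => sval d11 (sval g i)] = sval g.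
  by apply/ffunP => i; rewrite !ffunE.
by rewrite val_eqE eq_sym; case: eqP.
Qed.

Lemma Mrep_decomp a (x : Mrep k a) : x = \sum_(g : dhom a 1) x g *: Mact g id1.
Proof.
apply/ffunP => h; rewrite sum_ffunE (bigD1 h) //= big1 ?addr0.
  by rewrite ffunE Mact_id1 ffunE eqxx; exact: (esym (mulr1 _)).
by move=> g ng; rewrite ffunE Mact_id1 ffunE eq_sym (negPf ng); exact: mulr0.
Qed.

Lemma yoneda (Y : cmod k) phi a x : is_Mmor Y phi ->
  phi a x = \sum_(g : dhom a 1) x g *: vstar_act Y g (phi 1%N id1).
Proof.
move=> [pl pn]; rewrite {1}(Mrep_decomp x) (lin_sum (pl a)).
by apply: eq_bigr => g _; rewrite (lin_Z (pl a)) pn.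
Qed.

Definition ebas n (F : {ffun cube n -> cube 1}) : Xo n := [ffun h => (val h == F)%:R].
Definition eid := ebas [ffun x : cube 1 => x].
Definition phi a (x : Mrep k a) : Xo a :=
  \sum_(g : dhom a 1) x g *: vstar_act Xmod g eid.

Lemma phi_lin a : linear (@phi a).
Proof.
move=> c x y; rewrite /phi scaler_sumr -big_split /=; apply: eq_bigr => g _.
by rewrite !ffunE scalerDl scalerA.
Qed.

Lemma phi_nat_id n (hn : (n <= 1)%N) (g : dhom n n) x :
  phi (Mact g x) = vstar_act Xmod g (phi x).
Proof.
have hg : forall i, sval g i = i by move=> i; apply: ord_le1.
rewrite vstar_id //; congr phi; apply/ffunP => h; rewrite ffunE (big_pred1 h) // => h'.
rewrite /= -val_eqE /=; congr (_ == _); apply/ffunP => i; by rewrite ffunE hg.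
Qed.

Lemma phi_Mmor : is_Mmor Xmod phi.
Proof.
split; first exact: phi_lin.
move=> a b; case: b => [|[|b]] g x.
- have := dhom_le g; case: a g => // g _; exact: phi_nat_id.
- case: a g => [|[|a]] g; last by have := dhom_le g.
  + rewrite /phi (sum1 (t := g)); last by move=> u; apply: dhom_eq.
    rewrite (sum1 (t := d11)); last by move=> u; apply: dhom_eq.
    rewrite (lin_Z (vstar_lin g)) vstar_id; last by move=> i; apply: ord_le1.
    rewrite /= !ffunE (sum1 (t := d11)); last by move=> u; apply: dhom_eq.
    have -> : [ffun i => sval d11 (sval g i)] == sval g by apply/eqP/ffunP => -[].
    by [].
  + exact: phi_nat_id.
- have dh0 : forall (h : dhom b.+2 1), False by move=> h; have := dhom_le h.
  have -> : Mact g x = 0 by apply/ffunP => h; rewrite !ffunE big1 // => h'; case: (dh0 h').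
  have -> : phi x = 0 by rewrite /phi big1 // => h'; case: (dh0 h').
  by rewrite (lin_0 (@phi_lin _)) (lin_0 (vstar_lin g)).
Qed.

Lemma sign_t : (-1) ^+ #|[pred j : 'I_1 | ~~ [ffun _ => true] j]| = 1 :> k.
Proof. by rewrite (eq_card0 (A := [pred j : 'I_1 | ~~ [ffun _ => true] j])) // => j; rewrite !inE ffunE. Qed.

Lemma sign_f : (-1) ^+ #|[pred j : 'I_1 | ~~ [ffun _ => false] j]| = -1 :> k.
Proof.
rewrite (@eq_card1 _ ord0 [pred j : 'I_1 | ~~ [ffun _ => false] j]) ?expr1 // => j.
by rewrite !inE ffunE (ord1 j) eqxx.
Qed.

Lemma B0_sum (R : nmodType) (F : B 0 -> R) :
  \sum_(h : B 0) F h = F (hb true) + F (hb false).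
Proof.
rewrite (bigD1 (hb true)) // (bigD1 (hb false)) //=; last first.
  apply/eqP => /(congr1 val) /ffunP /(_ x0) /ffunP /(_ ord0); by rewrite !ffunE.
rewrite big1 ?addr0 // => h /andP[e1 e2].
by move: e1 e2; rewrite (B0_eq h); case: (sval h x0 ord0); rewrite eqxx // andbF.
Qed.

Definition w (N : cmod k) (E : cobj N 1) n (y : Xo n) : cobj N n :=
  \sum_(h : B n) y h *: cact N (val h) E.

Lemma w_cmor (N : cmod k) (E : cobj N 1) : is_cmor Xmod N (w E).
Proof.
split.
  move=> n c y z; rewrite /w scaler_sumr -big_split /=; apply: eq_bigr => h _.
  by rewrite !ffunE scalerDl scalerA.
move=> m n f cf y; rewrite /w /=.
under eq_bigr do rewrite /Xact /mklin /Xactf ffunE scaler_suml.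
rewrite (exchange_big_dep xpredT) //= linear_sum; apply: eq_bigr => h' _.
rewrite (sumBF (cgb_comp cf (valP h'))) /= linearZ /= cact_comp //.
exact: cgb_cgen (valP h').
Qed.

Lemma w_eid (N : cmod k) (E : cobj N 1) : w E eid = E.
Proof.
rewrite /w (sum1 (t := hid)); last exact: B1_eq.
by rewrite /= ffunE eqxx scale1r cact_id.
Qed.

Lemma phi_id1 : phi id1 = eid.
Proof.
rewrite /phi (sum1 (t := d11)); last by move=> u; apply: dhom_eq.
by rewrite /= ffunE scale1r vstar_id // => i; apply: ord_le1.
Qed.

Lemma piXact (f : {ffun cube 0 -> cube 1}) (z : Xo 1) :
  \sum_(h : B 0) Xact f z h = \sum_(h' : B 1) z h'.
Proof.
under eq_bigr do rewrite /Xact /mklin /Xactf ffunE.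
rewrite (exchange_big_dep xpredT) //=; apply: eq_bigr => h' _.
by rewrite (sumBF (cgb0 _)).
Qed.

Lemma sum_eid : \sum_(h' : B 1) eid h' = 1.
Proof. by rewrite (sum1 (t := hid)) /= ?ffunE ?eqxx //; exact: B1_eq. Qed.

Lemma pi_vstar (z : Xo 1) : \sum_(h : B 0) vstar_act Xmod delta0 z h = 0.
Proof.
rewrite /vstar_act; under eq_bigr do rewrite sum_ffunE.
rewrite exchange_big /= (eq_bigl xpredT); last by move=> eps; apply/forallP => -[].
under eq_bigr do (under eq_bigr do rewrite ffunE; rewrite -mulr_sumr piXact).
by rewrite cube1_sum sign_t sign_f mulN1r mul1r addrN.
Qed.

Lemma Xact_eid0 (F : {ffun cube 0 -> cube 1}) h : Xact F eid h = (F == val h)%:R.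
Proof.
rewrite /Xact /mklin /Xactf ffunE (sum1 (t := hid)); last exact: B1_eq.
rewrite /= ffunE eqxx; have -> : [ffun x => sval hid (F x)] = F.
  by apply/ffunP => x; rewrite !ffunE.
by case: eqP.
Qed.

Lemma cst_eq (e b : bool) :
  ([ffun x : cube 0 => [ffun _ : 'I_1 => e]] == [ffun x : cube 0 => [ffun j : 'I_1 => b]]) = (e == b).
Proof.
apply/eqP/eqP => [/ffunP/(_ x0)/ffunP/(_ ord0) | ->] //.
by rewrite !ffunE.
Qed.

Lemma scaleXE n c (v : Xo n) h : (c *: v) h = c * v h.
Proof. by rewrite ffunE. Qed.

Lemma vd0_eid (b : bool) : vstar_act Xmod delta0 eid (hb b) = if b then 1 else -1.
Proof.
rewrite /vstar_act sum_ffunE (eq_bigl xpredT); last by move=> eps; apply/forallP => -[].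
rewrite cube1_sum !scaleXE !insmap_d0 !Xact_eid0 /= sign_t sign_f.
rewrite !cst_eq; case: b => /=; rewrite ?mul1r ?mulN1r ?mulr1 ?mulr0 ?oppr0 ?addr0 ?add0r //.
Qed.

End Main.

Theorem proposition4p6 (k : fieldType) :
  (forall y : Mrep k 0, exists x : Mrep k 1, Mact delta0 x = y) /\
  (forall (N : cmod k) (eta : forall a, Mrep k a -> cobj N a),
     is_vshriek_of_M N eta ->
     exists psi : {linear cobj N 0 -> k^o},
       (forall c : k, exists y, psi y = c) /\
       (forall y, psi y = 0 <-> exists x : cobj N 1, vstar_act N delta0 x = y)).
Proof.
split.
  move=> y; exists [ffun _ => y delta0]; apply/ffunP => h.
  rewrite ffunE (sum1 (t := d11)); last by move=> u; apply: dhom_eq.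
  have -> : [ffun i => sval d11 (sval delta0 i)] == sval h by apply/eqP/ffunP => -[].
  by rewrite ffunE (dhom_eq (leqnn 1) h delta0).
move=> N eta [etaM Huniv].
have [[u [uc uphi]] _] := Huniv _ _ (@phi_Mmor k).
set E := eta 1%N (id1 k).
have wphi : forall a x, w E (phi x) = eta a x.
  move=> a x; rewrite (yoneda x etaM) /phi (lin_sum ((w_cmor E).1 a)).
  apply: eq_bigr => g _; rewrite (lin_Z ((w_cmor E).1 a)) (cmor_vstar _ (w_cmor E)).
    by rewrite w_eid.
  by move=> eps; apply: cgb_cgen; apply: insmap_cgb.
have wu : forall n y, w E (u n y) = y.
  move=> n y; apply: ((Huniv N eta etaM).2 (fun n y => w E (u n y)) (fun n y => y)).
  - split.
      move=> m c y1 z; rewrite /= (lin_D (uc.1 m)) (lin_Z (uc.1 m)).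
      by rewrite (lin_D ((w_cmor E).1 m)) (lin_Z ((w_cmor E).1 m)).
    by move=> m m' f cf y1; rewrite uc.2 // (w_cmor E).2.
  - by split => // m c y1 z.
  - by move=> a x; rewrite uphi wphi.
  - by [].
pose psif (y : cobj N 0) : k^o := \sum_(h : B 0) u 0%N y h.
have psil : linear psif.
  move=> c y z; rewrite /psif (lin_D (uc.1 0%N)) (lin_Z (uc.1 0%N)) scaler_sumr -big_split.
  by apply: eq_bigr => h _; rewrite !ffunE.
exists (mklin psil); split.
  move=> c; exists (c *: cact N (val (hb true)) E).
  change (psif (c *: cact N (val (hb true)) E) = c); rewrite /psif (lin_Z (uc.1 0%N)) uc.2; last exact: cgb_cgen (valP _).
  rewrite uphi phi_id1.
  under eq_bigr do rewrite ffunE.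
  by rewrite -mulr_sumr piXact sum_eid mulr1.
move=> y; split; last first.
  move=> [x <-]; change (psif (vstar_act N delta0 x) = 0).
  rewrite /psif (cmor_vstar _ uc) ?pi_vstar //.
  by move=> eps; apply: cgb_cgen; apply: insmap_cgb.
change (psif y = 0 -> exists x : cobj N 1, vstar_act N delta0 x = y); rewrite /psif => hz.
rewrite -(wu 0%N y); set z := u 0%N y in hz *.
have -> : z = vstar_act (Xmod k) delta0 (z (hb true) *: eid k).
  rewrite (lin_Z (vstar_lin _)); apply/ffunP => h; rewrite scaleXE (B0_eq h) vd0_eid.
  move: hz; rewrite B0_sum => /eqP; rewrite addr_eq0 => /eqP hz.
  by case: (sval h x0 ord0); rewrite ?mulr1 // hz mulrN1 opprK.
exists (w E (z (hb true) *: eid k)).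
rewrite (cmor_vstar _ (w_cmor E)) //.
by move=> eps; apply: cgb_cgen; apply: insmap_cgb.
Qed.
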